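(* Let $\Delta\ge1$, $p\ge1$ and $\alpha$ be positive integers. There is an infinite family of graphs of maximum degree $\Delta$ and an absolute constant $C>0$ such that for every graph $G=(V,E)$ in the family and every assignment of nonempty sets $L(v)\subseteq\{1,\dots,\alpha\}$ to vertices $v\in V$ with the property that every choice of one color $\ell_v\in L(v)$ for each $v$ yields a $p$-defective $\alpha$-coloring of $G$, we have $\min_{v\in V}|L(v)|\le C\alpha p/\Delta$, i.e. the solution domain has size $O(\alpha\cdot p/\Delta)$; consequently the contingency factor $\alpha/\min_v|L(v)|$ is $\Omega(\Delta/p)$.
   Context: A map $\varphi:V\to\{1,\dots,\alpha\}$ is a $p$-defective $\alpha$-coloring of $G=(V,E)$ if every vertex $v$ has at most $p$ neighbors $u$ with $\varphi(u)=\varphi(v)$. Solution domain size $=\min_v|L(v)|$; contingency factor $=\alpha/\min_v|L(v)|$. *)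

(* Defs.v *)
From mathcomp Require Import all_boot all_order all_algebra.
Set Implicit Arguments. Unset Strict Implicit. Unset Printing Implicit Defensive.

Record sgraph := SGraph {
  gn : nat;
  gadj : rel 'I_gn;
  gadj_sym : symmetric gadj;
  gadj_irr : irreflexive gadj }.

Definition deg (G : sgraph) (v : 'I_(gn G)) : nat := #|[set u | @gadj G v u]|.

Definition maxdeg (G : sgraph) : nat := \max_(v : 'I_(gn G)) deg v.

(* phi : V -> colours 'I_alpha (colours {1..alpha} relabelled as {0..alpha-1})
   is p-defective: every vertex has at most p neighbours of its own colour. *)
Definition p_defective (G : sgraph) (p alpha : nat) (phi : 'I_(gn G) -> 'I_alpha) :=
  forall v : 'I_(gn G), #|[set u | @gadj G v u && (phi u == phi v)]| <= p.

(* solution domain size min_v |L(v)| (default alpha for the empty vertex set,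
   which never occurs for graphs of maximum degree >= 1). *)
Definition sol_domain_size (G : sgraph) (alpha : nat) (L : 'I_(gn G) -> {set 'I_alpha}) : nat :=
  \big[minn/alpha]_(v : 'I_(gn G)) #|L v|.

(* Main.v *)
Require Import Defs.
From mathcomp Require Import all_boot all_order all_algebra.
From mathcomp Require Import zify ring lra.
Import Order.TTheory GRing.Theory Num.Theory.

Definition cadj (D n : nat) : rel 'I_n :=
  fun u v => (u != v) && (val u <= D) && (val v <= D).

Lemma cadj_sym D n : symmetric (cadj D n).
Proof. by move=> u v; rewrite /cadj eq_sym; case: (u <= D); case: (v <= D); rewrite ?andbF ?andbT. Qed.

Lemma cadj_irr D n : irreflexive (cadj D n).
Proof. by move=> u; rewrite /cadj eqxx. Qed.

Definition cgraph D n := SGraph (@cadj_sym D n) (@cadj_irr D n).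

Lemma card_low n m : m <= n -> #|[set u : 'I_n | val u < m]| = m.
Proof.
move=> hmn.
have -> : [set u : 'I_n | val u < m] = [set widen_ord hmn i | i in 'I_m].
  apply/setP => u; rewrite inE; apply/idP/imsetP.
    by move=> hu; exists (Ordinal hu) => //; apply: val_inj.
  by case=> i _ ->; rewrite /= ltn_ord.
by rewrite card_imset ?card_ord //; by move=> i j /(congr1 val) /= /val_inj.
Qed.

Lemma minn_le (I : finType) (a : nat) (F : I -> nat) j :
  \big[minn/a]_(i : I) F i <= F j.
Proof.
have: j \in index_enum I by rewrite mem_index_enum.
elim: (index_enum I) => [//|x r IH].
rewrite inE big_cons => /orP [/eqP <-|/IH h]; first by rewrite geq_minl.
by rewrite geq_min h orbT.
Qed.

Theorem theorem4 :
  exists C : rat, (0 < C)%R /\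
  forall Delta p alpha : nat, 1 <= Delta -> 1 <= p -> 1 <= alpha ->
  exists F : sgraph -> Prop,
    (forall N : nat, exists G, F G /\ N < gn G) /\
    (forall G, F G -> maxdeg G = Delta) /\
    (forall G, F G ->
       forall L : 'I_(gn G) -> {set 'I_alpha},
         (forall v, L v != set0) ->
         (forall phi : 'I_(gn G) -> 'I_alpha,
             (forall v, phi v \in L v) -> @p_defective G p alpha phi) ->
         ((@sol_domain_size G alpha L)%:R <= C * alpha%:R * p%:R / Delta%:R)%R).
Proof.
exists 2%R; split => //.
move=> D p a hD hp ha.
exists (fun G => D < gn G /\ forall u v, @gadj G u v = (u != v) && (val u <= D) && (val v <= D)).
split; [|split].
- move=> N; exists (cgraph D (N + D + 1)); split; last by simpl; lia.
  by split => //=; lia.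
- case=> n adj hs hi /= [hn hadj].
  rewrite /maxdeg /deg /=.
  have hA := card_low _ _ hn.
  have key : forall v : 'I_n, v <= D ->
      [set u | adj v u] = [set u : 'I_n | val u < D.+1] :\ v.
    move=> v hv; apply/setP => u; rewrite !inE hadj hv andbT eq_sym ltnS.
    by [].
  have kc : forall v : 'I_n, v <= D -> #|[set u | adj v u]| = D.
    move=> v hv; rewrite key //.
    by move: (cardsD1 v [set u : 'I_n | val u < D.+1]); rewrite hA inE ltnS hv /= => [[]].
  apply/eqP; rewrite eqn_leq; apply/andP; split.
    apply/bigmax_leqP => v _.
    case: (leqP (val v) D) => hv; first by rewrite kc.
    suff -> : [set u | adj v u] = set0 by rewrite cards0.
    by apply/setP => u; rewrite !inE hadj (leqNgt v) hv /= andbF.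
  have h0 : 0 < n by lia.
  rewrite -(kc (Ordinal h0)) //.
  exact: (leq_bigmax (Ordinal h0)).
- case=> n adj hs hi /= [hn hadj] L hne hdef.
  set A := [set u : 'I_n | val u < D.+1].
  set S := fun c : 'I_a => [set v in A | c \in L v].
  have hS : forall c : 'I_a, #|S c| <= p.+1.
    move=> c; rewrite leqNgt; apply/negP => hbig.
    pose phi v := if v \in S c then c else odflt c [pick x in L v].
    have hphi : forall v, phi v \in L v.
      move=> v; rewrite /phi; case: ifP => [/setIdP[_ ->]//|_].
      case: pickP => [x hx //|h]; exfalso; move/negP: (hne v); apply.
      by apply/eqP/setP => x; rewrite inE; have := h x.
    have [v hv] : exists v, v \in S c.
      have : 0 < #|S c| by lia.
      by move/card_gt0P => [v hv]; exists v.
    have := hdef phi hphi v; rewrite leqNgt => /negP; apply.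
    have hsub : S c :\ v \subset [set u | adj v u && (phi u == phi v)].
      apply/subsetP => u; rewrite !inE => /andP [huv hu].
      move/andP: hu => [hu hcu].
      move: (hv); rewrite /S !inE => /andP [hv' hcv].
      by rewrite hadj eq_sym huv /= -ltnS hv' -ltnS hu /= /phi /S !inE hu hcu hv' hcv /= eqxx.
    apply: (leq_trans _ (subset_leq_card hsub)).
    move: (cardsD1 v (S c)); rewrite hv.
    rewrite add1n => h; rewrite h ltnS in hbig; exact: hbig.
  set m := sol_domain_size _.
  have hSc : forall c, #|S c| = \sum_(v in A) (c \in L v).
    move=> c; rewrite -sum1_card big_mkcond [RHS]big_mkcond /=.
    by apply: eq_bigr => v _; rewrite /S !inE; case: (c \in L v); case: (val v < D.+1).
  have hLv : forall v, #|L v| = \sum_(c : 'I_a) (c \in L v).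
    move=> v; rewrite -sum1_card big_mkcond /=.
    by apply: eq_bigr => c _; case: (c \in L v).
  have hm : D.+1 * m <= a * p.+1.
    have hA : #|A| = D.+1 by apply: card_low.
    rewrite -hA -sum_nat_const.
    apply: (@leq_trans (\sum_(v in A) #|L v|)).
      by apply: leq_sum => v _; apply: minn_le.
    rewrite (eq_bigr _ (fun v _ => hLv v)) exchange_big /=.
    rewrite -[a in a * _]card_ord -sum_nat_const.
    by apply: leq_sum => c _; rewrite -hSc.
  rewrite ler_pdivlMr ?ltr0n //.
  have : ((m * D)%:R <= (2 * a * p)%:R :> rat)%R by rewrite ler_nat; nia.
  by rewrite !natrM.
Qed.
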